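(* Let $f:V_n^{(p)}\to\mathbb{F}_p$ be an $s$-plateaued function with dual $f^*$. If $f(0)=0$ and $f(x)=f(-x)$ for all $x\in V_n^{(p)}$, then $f^*(0)=0$.
   Context: Let $p$ be an odd prime, $V_n^{(p)}$ an $n$-dimensional $\mathbb{F}_p$-vector space with a non-degenerate symmetric bilinear form $\langle\cdot,\cdot\rangle_n$, $\xi_p=e^{2\pi\sqrt{-1}/p}$. For $f:V_n^{(p)}\to\mathbb{F}_p$, $\widehat{\chi_f}(\alpha)=\sum_x\xi_p^{f(x)-\langle\alpha,x\rangle_n}$; $f$ is $s$-plateaued ($0\le s\le n$) if $|\widehat{\chi_f}(\alpha)|\in\{0,p^{(n+s)/2}\}$ for all $\alpha$, with $\mathrm{Supp}(\widehat{\chi_f})$ the set where $p^{(n+s)/2}$ is attained. Let $\mu=1$ if $p^{n+s}\equiv1\pmod4$, else $\mu=\sqrt{-1}$. For $\alpha\in\mathrm{Supp}(\widehat{\chi_f})$, $\widehat{\chi_f}(\alpha)=\epsilon_\alpha\mu p^{(n+s)/2}\xi_p^{f^*(\alpha)}$ with unique $\epsilon_\alpha\in\{\pm1\}$ and $f^*(\alpha)\in\mathbb{F}_p$; $f^*:\mathrm{Supp}(\widehat{\chi_f})\to\mathbb{F}_p$ is the dual of $f$. *)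

(* Defs.v *)
From HB Require Import structures.
From mathcomp Require Import all_boot all_order all_algebra all_field.
Set Implicit Arguments. Unset Strict Implicit. Unset Printing Implicit Defensive.
Import Order.TTheory GRing.Theory Num.Theory.
Local Open Scope ring_scope.

(* V_n^(p) is modelled as 'rV['F_p]_n; the bilinear form is
   <a, x> = a B x^T for a symmetric invertible matrix B. *)
Definition bform (p n : nat) (B : 'M['F_p]_n) (a x : 'rV['F_p]_n) : 'F_p :=
  (a *m B *m x^T) 0 0.

(* xi_p = e^{2 pi i / p}: n.-root (-1) is e^{i pi / n} in algC. *)
Definition xi (p : nat) : algC := (p.-root (-1)) ^+ 2.

Definition xiF (p : nat) (c : 'F_p) : algC := xi p ^+ (nat_of_ord c).

Definition walsh (p n : nat) (B : 'M['F_p]_n) (f : 'rV['F_p]_n -> 'F_p)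
  (alpha : 'rV['F_p]_n) : algC :=
  \sum_(x : 'rV['F_p]_n) xiF (f x - bform B alpha x).

Definition plat_amp (p n s : nat) : algC := sqrtC (p%:R) ^+ (n + s).

Definition plateaued (p n s : nat) (B : 'M['F_p]_n) (f : 'rV['F_p]_n -> 'F_p) :=
  (s <= n)%N /\
  forall alpha, `|walsh B f alpha| = 0 \/ `|walsh B f alpha| = plat_amp p n s.

Definition in_supp (p n s : nat) (B : 'M['F_p]_n) (f : 'rV['F_p]_n -> 'F_p) alpha :=
  `|walsh B f alpha| = plat_amp p n s.

Definition mu (p n s : nat) : algC :=
  if (p ^ (n + s) %% 4 == 1)%N then 1 else 'i.

(* f^*(alpha) = c  iff alpha in Supp and chi^(alpha) = eps mu p^{(n+s)/2} xi^c
   for some sign eps (f^*(alpha) is the unique such c). *)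
Definition dual_is (p n s : nat) (B : 'M['F_p]_n) (f : 'rV['F_p]_n -> 'F_p)
  (alpha : 'rV['F_p]_n) (c : 'F_p) : Prop :=
  in_supp s B f alpha /\
  exists e : bool, walsh B f alpha = (-1) ^+ e * mu p n s * plat_amp p n s * xiF c.

(* Main.v *)
Require Import Defs.
From HB Require Import structures.
From mathcomp Require Import all_boot all_order all_algebra all_field.
From mathcomp Require Import zify ring.
Import Order.TTheory GRing.Theory Num.Theory.
Local Open Scope ring_scope.
Lemma odd_not_2Aint (m : nat) (x : algC) : odd m -> x \in Aint -> m%:R = 2%:R * x -> False.
Proof.
move=> om Ax E.
have Hx : x = m%:R / 2%:R by rewrite E mulrAC divff ?mul1r ?pnatr_eq0.
have : x \is a Num.int by apply: Cint_rat_Aint => //; rewrite Hx rpred_div ?rpred_nat.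
case/archimedean.Num.Theory.intrP => z xz.
have : ((m:int)%:~R : algC) = (2 * z)%:~R by rewrite intrM -xz -E.
move/eqP; rewrite eqr_int => /eqP /(congr1 absz).
rewrite abszM /= => mE; move: om; rewrite mE oddM //.
Qed.

Lemma prod_one_sub (p : nat) (z : algC) : p.-primitive_root z ->
  \prod_(1 <= k < p) (1 - z ^+ k) = p%:R.
Proof.
move=> pz; have p0 := prim_order_gt0 pz.
have F := factor_Xn_sub_1 pz.
rewrite big_ltn // expr0 subrX1 in F.
have nz : ('X - 1%:P : {poly algC}) != 0 by rewrite polyXsubC_eq0.
have F2 := mulfI nz F.
have := congr1 (fun q : {poly algC} => q.[1]) F2; rewrite /= horner_prod horner_sum.
under eq_bigr do rewrite hornerXsubC.
under [X in _ = X -> _]eq_bigr do rewrite hornerXn expr1n.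
by rewrite sumr_const card_ord.
Qed.

Lemma no_half (p : nat) (z b : algC) : prime p -> odd p -> p.-primitive_root z ->
  b \in Aint -> z - 1 = 2%:R * b -> False.
Proof.
move=> pp op pz Ab E.
have p1 : (1 < p)%N by apply: prime_gt1.
have := prod_one_sub _ _ pz; rewrite big_ltn // expr1.
have -> : 1 - z = 2%:R * (- b) by rewrite mulrN -E opprB.
rewrite -mulrA => H; apply: (odd_not_2Aint _ _ op _ (esym H)).
have Az := Aint_prim_root pz.
by rewrite rpredM ?rpredN // rpred_prod // => i _; rewrite rpredB ?rpred1 ?rpredX.
Qed.
Lemma two_gt0 : (0 : algC) < 1 + 1.
Proof. by rewrite addr_gt0 ?ltr01. Qed.

Lemma rootN1_ne (p : nat) : (1 < p)%N -> p.-root (-1 : algC) != -1.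
Proof.
move=> p1; apply/eqP => Er.
have p0 : (0 < p)%N by apply: ltnW.
have [z pz] := @C_prim_root_exists (p * 2)%N (ltac:(by rewrite muln_gt0 p0)).
have zp : z ^+ p = -1.
  have : (z ^+ p) ^+ 2 = 1 by rewrite -exprM prim_expr_order.
  move/eqP; rewrite sqrf_eq1 => /orP [/eqP h|/eqP //].
  have := prim_order_dvd pz p; rewrite h eqxx => /(dvdn_leq p0).
  by rewrite leqNgt ltn_Pmulr.
have zn : z != -1.
  apply/eqP => h; have := prim_order_dvd pz 2; rewrite h sqrrN expr1n eqxx.
  move=> /(dvdn_leq (isT : (0 < 2)%N)); lia.
have [w [wp wn wI]] : exists w : algC, [/\ w ^+ p = -1, w != -1 & 0 <= 'Im w].
  case: (boolP (0 <= 'Im z)) => hz; first by exists z.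
  exists z^*; split.
  - by rewrite -rmorphXn zp rmorphN1.
  - by apply: contra zn => /eqP h; rewrite -(conjCK z) h rmorphN1.
  - rewrite Im_conj oppr_ge0; apply: ltW.
    by rewrite real_ltNge ?Creal_Im ?real0.
have := rootC_Re_max p0 wp wI; rewrite Er.
have -> : 'Re (-1 : algC) = -1 by apply/Creal_ReP; rewrite rpredN rpred1.
move=> hRe.
have nw : `|w| = 1.
  by apply/eqP; rewrite -(pexpr_eq1 p0) ?normr_ge0 // -normrX wp normrN normr1.
have := normC2_Re_Im w; rewrite nw expr1n.
set a := 'Re w; set b := 'Im w => H1.
have a2 : 1 <= a ^+ 2 by rewrite -sqrrN exprn_ege1 // lerNr.
have b2 : 0 <= b ^+ 2 by rewrite exprn_ge0.
have b20 : b ^+ 2 = 0.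
  apply/eqP; rewrite eq_le b2 andbT.
  have -> : b ^+ 2 = 1 - a ^+ 2 by rewrite H1 addrAC subrr add0r.
  by rewrite subr_le0.
have b0 : b = 0 by move/eqP: b20; rewrite expf_eq0 => /andP[_ /eqP].
have a1 : a ^+ 2 = 1 by rewrite H1 b0 expr0n addr0.
move/eqP: a1; rewrite sqrf_eq1 => /orP[/eqP a1|/eqP aN1].
  move: hRe; rewrite -/a a1 -subr_ge0 -opprD.
  have := two_gt0; rewrite -oppr_lt0 => h1 h2.
  by have := lt_le_trans h1 h2; rewrite ltxx.
by move: wn; rewrite (Crect w) -/a -/b aN1 b0 mulr0 addr0 eqxx.
Qed.
Lemma xi_prim p : prime p -> p.-primitive_root (xi p).
Proof.
move=> pp; have p1 := prime_gt1 pp; have p0 := prime_gt0 pp.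
set r := p.-root (-1 : algC).
have rp : r ^+ p = -1 by rewrite rootCK.
have xp : xi p ^+ p = 1 by rewrite /xi -exprM mulnC exprM rp sqrrN expr1n.
have x1 : xi p != 1.
  rewrite /xi sqrf_eq1 negb_or; apply/andP; split; last exact: rootN1_ne.
  apply/eqP => r1; move/eqP: rp; rewrite /r r1 expr1n -addr_eq0.
  by rewrite (_ : 1 + 1 = 2%:R) // pnatr_eq0.
have [m pm mp] := prim_order_exists p0 xp.
case/primeP: pp => _ /(_ m mp) /orP [/eqP m1|/eqP mE].
  by have := prim_order_dvd pm 1; rewrite m1 dvdnn expr1 (negbTE x1).
by rewrite mE in pm.
Qed.
Lemma neg_ne (p n : nat) (x : 'rV['F_p]_n) : prime p -> odd p -> x != 0 -> x != - x.
Proof.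
move=> pp op; apply: contra => /eqP h.
have : (2%:R : 'F_p) *: x == 0 by rewrite scaler_nat mulr2n {1}h addNr.
rewrite scaler_eq0 => /orP [|//].
rewrite -(dvdn_pcharf (pchar_Fp pp)) => /(dvdn_leq (isT : (0 < 2)%N)) h2.
have p1 := prime_gt1 pp.
have e : p = 2%N by lia.
by rewrite e in op.
Qed.

Lemma half_split p n (g : 'rV['F_p]_n -> algC) : prime p -> odd p ->
  (forall x, g (-x) = g x) ->
  \sum_x g x = g 0 + 2%:R * \sum_(x | (enum_rank x < enum_rank (-x))%N) g x.
Proof.
move=> pp op gE.
rewrite (bigD1 0) //=; congr (_ + _).
rewrite (bigID (fun x => (enum_rank x < enum_rank (-x))%N)) /= mulr_natl mulr2n.
congr (_ + _).
  by apply: eq_bigl => x; case: eqP => [->|_] /=; rewrite ?oppr0 ?ltnn.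
rewrite [RHS](reindex_inj oppr_inj) /=; apply: eq_big => [x|x _]; last by rewrite gE.
rewrite opprK; case: (eqVneq x 0) => [->|xn]; first by rewrite oppr0 ltnn.
rewrite /= -leqNgt leq_eqVlt.
have : (enum_rank (-x) : nat) != enum_rank x.
  by rewrite (inj_eq val_inj) (inj_eq enum_rank_inj) eq_sym neg_ne.
by move/negbTE => ->.
Qed.

Theorem lemma7 (p n s : nat) (B : 'M['F_p]_n) (f : 'rV['F_p]_n -> 'F_p) :
  prime p -> odd p ->
  B^T = B -> B \in unitmx ->
  plateaued s B f ->
  f 0 = 0 -> (forall x, f x = f (- x)) ->
  in_supp s B f 0 /\
  (forall c : 'F_p, dual_is s B f 0 c -> c = 0).
Proof.
move=> pp op _ _ [_ plat] f0 fE.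
set a := \sum_(x | (enum_rank x < enum_rank (-x))%N) @xiF p (f x).
have Aa : a \in Aint.
  by rewrite rpred_sum // => x _; rewrite /xiF rpredX // (Aint_prim_root (xi_prim _ pp)).
have W0 : walsh B f 0 = 1 + 2%:R * a.
  rewrite /walsh; under eq_bigr do rewrite /bform !mul0mx mxE subr0.
  rewrite (half_split _ _ (fun x => @xiF p (f x)) pp op); last by move=> x; rewrite -fE.
  by rewrite f0 /xiF /= expr0.
split.
  rewrite /in_supp; case: (plat 0) => // H0; exfalso.
  move/normr0_eq0: H0; rewrite W0 => /eqP; rewrite addr_eq0 => /eqP h.
  by apply: (odd_not_2Aint 1 (- a) isT); rewrite ?rpredN // mulrN -h.
move=> c [_ [e He]]; apply/eqP; apply: contraT => cn.
set N := (p ^ (n + s))%N.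
have amp2 : plat_amp p n s ^+ 2 = N%:R.
  by rewrite /plat_amp -exprM mulnC exprM sqrtCK natrX.
have [e' mu2] : exists e' : bool, mu p n s ^+ 2 = (-1) ^+ e'.
  by rewrite /mu; case: ifP => _; [exists false; rewrite expr1n | exists true; rewrite sqrCi expr1].
set zeta := xi p ^+ (2 * c).
have Wsq : (1 + 2%:R * a) ^+ 2 = (-1) ^+ e' * N%:R * zeta.
  by rewrite -W0 He !exprMn sqrr_sign mul1r mu2 amp2 /xiF -exprM mulnC.
have pz : p.-primitive_root zeta.
  rewrite /zeta prim_root_exp_coprime ?(xi_prim _ pp) // coprimeMl; apply/andP; split.
    rewrite coprime_sym prime_coprime //; apply/negP => /(dvdn_leq (isT : (0 < 2)%N)) h2.
    have p1 := prime_gt1 pp.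
    have e2 : p = 2%N by lia.
    by rewrite e2 in op.
  rewrite coprime_sym prime_coprime //.
  have cp : (c < p)%N by apply: leq_trans (ltn_ord c) _; rewrite (Fp_cast pp).
  have c0 : (0 < c)%N.
    rewrite lt0n; apply: contra cn => /eqP h; apply/eqP; exact: val_inj.
  by rewrite gtnNdvd.
have oN : odd N by rewrite /N oddX op orbT.
set m := N./2.
have NE' : N = (1 + 2 * m)%N by rewrite -[LHS](odd_double_half N) oN -muln2 mulnC.
have NE : (N%:R : algC) = 1 + 2%:R * m%:R by rewrite NE' natrD natrM.
rewrite NE in Wsq.
have Az := Aint_prim_root pz.
exfalso; apply: (no_half p zeta (if e' then - (m%:R * zeta) - 1 - 2%:R * a - 2%:R * a ^+ 2
   else - (m%:R * zeta) + 2%:R * a + 2%:R * a ^+ 2) pp op pz).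
  have A2 : 2%:R * a ^+ 2 \in Aint by apply: rpredM; [exact: rpred_nat | exact: rpredX].
  have A1 : 2%:R * a \in Aint by apply: rpredM; [exact: rpred_nat | exact: Aa].
  have Am : - (m%:R * zeta) \in Aint by rewrite rpredN rpredM ?rpred_nat.
  case: (e').
    by apply: rpredB => //; apply: rpredB => //; apply: rpredB => //; exact: rpred1.
  by apply: rpredD => //; apply: rpredD.
apply/eqP; rewrite -subr_eq0; case: (e') Wsq => Wsq.
  rewrite expr1 in Wsq.
  have -> : zeta - 1 - 2%:R * (- (m%:R * zeta) - 1 - 2%:R * a - 2%:R * a ^+ 2)
    = (1 + 2%:R * a) ^+ 2 - (-1) * (1 + 2%:R * m%:R) * zeta by ring.
  by rewrite Wsq subrr.
rewrite expr0 mul1r in Wsq.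
have -> : zeta - 1 - 2%:R * (- (m%:R * zeta) + 2%:R * a + 2%:R * a ^+ 2)
  = (1 + 2%:R * m%:R) * zeta - (1 + 2%:R * a) ^+ 2 by ring.
by rewrite Wsq subrr.
Qed.
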